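(* Let $n \ge 2$. For any experiment design $\mathcal{S} = (S_1,\dots,S_T)$ of subsets of $[n]$, whether adaptive or non-adaptive, that enables nest identification for $n$ items under the Nested Logit model with outside option satisfying Assumption 1 (in the sense defined in the context), we have $|\mathcal{S}| = T = \Omega(\log n)$.
   Context: Nested Logit model with outside option on items $[n]=\{1,\dots,n\}$: $\mathcal{N}$ is a partition of $[n]$ into nests, $N(i)$ the nest containing $i$; weights $v_i > 0$; parameters $\lambda_N \in [0,1]$, with an extra weight $v_N>0$ when $\lambda_N=0$. $v_N(S) = (\sum_{i \in N \cap S} v_i)^{\lambda_N}$ if $\lambda_N \in (0,1]$, $v_N(S) = v_N \mathbf{1}(N \cap S \neq \emptyset)$ if $\lambda_N = 0$. For $i \in S$, $\phi(i,S) = \frac{v_{N(i)}(S)}{1 + \sum_{N} v_N(S)} \cdot \frac{v_i}{\sum_{j \in N(i) \cap S} v_j}$, and the outside option has $\phi(0,S) = \frac{1}{1 + \sum_N v_N(S)}$. Assumption 1: $\lambda_N = 1$ iff $|N| = 1$. An experiment design queries assortments $S_1,\dots,S_T \subseteq [n]$ and observes the exact choice probabilities $\phi(\cdot, S_t)$ for each queried assortment; it is non-adaptive if the $S_t$ are fixed in advance and adaptive if each $S_t$ may depend on the probabilities observed for $S_1,\dots,S_{t-1}$. It enables nest identification if, for every Nested Logit model satisfying Assumption 1, the nest partition $\mathcal{N}$ is uniquely determined by the observed choice probabilities, i.e., no two such models with different nest partitions induce identical choice probabilities on all queried assortments. *)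

(* Defs.v *)
From HB Require Import structures.
From mathcomp Require Import all_boot all_order all_algebra.
From mathcomp Require Import reals exp.
Set Implicit Arguments. Unset Strict Implicit. Unset Printing Implicit Defensive.
Import Order.TTheory GRing.Theory Num.Theory.
Local Open Scope ring_scope.

Section NestedLogit.
Variables (R : realType) (n : nat).

Record NLmodel := NLModel {
  nests : {set {set 'I_n}};
  wt    : 'I_n -> R;
  lam   : {set 'I_n} -> R;
  wN    : {set 'I_n} -> R        (* extra nest weight v_N (used when lambda_N = 0) *)
}.

Definition valid_NL (M : NLmodel) : Prop :=
  [/\ partition (nests M) [set: 'I_n],
      (forall i, 0 < wt M i),
      (forall N, N \in nests M -> 0 <= lam M N <= 1),
      (forall N, N \in nests M -> lam M N = 0 -> 0 < wN M N)
    & (* Assumption 1 *)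
      (forall N, N \in nests M -> (lam M N = 1 <-> #|N| = 1%N))].

Definition nest_of (M : NLmodel) (i : 'I_n) : {set 'I_n} := pblock (nests M) i.

Definition wsum (M : NLmodel) (A : {set 'I_n}) : R := \sum_(j in A) wt M j.

Definition vnest (M : NLmodel) (N S : {set 'I_n}) : R :=
  if 0 < lam M N then powR (wsum M (N :&: S)) (lam M N)
  else (if N :&: S != set0 then wN M N else 0).

Definition denom (M : NLmodel) (S : {set 'I_n}) : R :=
  1 + \sum_(N in nests M) vnest M N S.

(* choice probabilities phi(., S): None is the outside option 0;
   items not offered in S get probability 0. *)
Definition choice_prob (M : NLmodel) (S : {set 'I_n}) (o : option 'I_n) : R :=
  match o with
  | None => 1 / denom M S
  | Some i =>
      if i \in S then
        vnest M (nest_of M i) S / denom M S * (wt M i / wsum M (nest_of M i :&: S))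
      else 0
  end.

(* An (adaptive) experiment design: the next assortment is a function of the
   observed choice-probability vectors of the previous queries.  Non-adaptive
   designs are those ignoring the history. *)
Definition design := seq (option 'I_n -> R) -> {set 'I_n}.

Fixpoint transcript (d : design) (M : NLmodel) (t : nat) : seq (option 'I_n -> R) :=
  match t with
  | O => [::]
  | t'.+1 => let h := transcript d M t' in rcons h (choice_prob M (d h))
  end.

Definition identifies (d : design) (T : nat) : Prop :=
  forall M1 M2 : NLmodel, valid_NL M1 -> valid_NL M2 ->
    transcript d M1 T = transcript d M2 T -> nests M1 = nests M2.

End NestedLogit.

(* Main.v *)
Require Import Defs.
From HB Require Import structures.
From mathcomp Require Import all_boot all_order all_algebra.
From mathcomp Require Import reals exp.
From Stdlib Require Import FunctionalExtensionality.
From mathcomp Require Import ring lra.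
Set Implicit Arguments. Unset Strict Implicit. Unset Printing Implicit Defensive.
Import Order.TTheory GRing.Theory Num.Theory.
Local Open Scope ring_scope.

Definition Mf (R : realType) (n : nat) (f : 'I_n -> 'I_n) : NLmodel R n :=
  NLModel (preim_partition f [set: 'I_n]) (fun _ => 1)
    (fun N => if #|N| == 1%N then 1 else 0) (fun _ => 2).

Lemma eqi_pre (n : nat) (f : 'I_n -> 'I_n) :
  {in [set: 'I_n] & &, equivalence_rel (fun x y => f x == f y)}.
Proof. by move=> x y z _ _ _; split=> // /eqP->. Qed.

Lemma Mf_valid (R : realType) (n : nat) (f : 'I_n -> 'I_n) : valid_NL (Mf R f).
Proof.
split => /=.
- exact: preim_partitionP.
- by move=> _; exact: ltr01.
- by move=> N _; case: ifP => _; rewrite ?lexx ?ler01.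
- by move=> N _ _; rewrite ltr0n.
- move=> N _; case: ifP => [/eqP -> //| /eqP h]; split => // h1.
  by move: (@oner_neq0 R); rewrite h1 eqxx.
Qed.

Lemma wsum1 (R : realType) (n : nat) (f : 'I_n -> 'I_n) (A : {set 'I_n}) :
  wsum (Mf R f) A = #|A|%:R.
Proof. by rewrite /wsum sumr_const. Qed.

Lemma vnest_eq (R : realType) (n : nat) (f : 'I_n -> 'I_n) (N S : {set 'I_n}) :
  N \in nests (Mf R f) -> (#|N| <= 2)%N -> (N :&: S = set0 \/ N \subset S) ->
  vnest (Mf R f) N S = #|N :&: S|%:R.
Proof.
move=> HN Hsz Hsep; rewrite /vnest.
have [h1|h1] := boolP (#|N| == 1%N).
  have -> : lam (Mf R f) N = 1 by rewrite /= h1.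
  by rewrite ltr01 powRr1 ?wsum1 // ler0n.
have -> : lam (Mf R f) N = 0 by rewrite /= (negbTE h1).
have -> : wN (Mf R f) N = 2 by [].
rewrite ltxx.
have N0 : N != set0.
  have [_ _ P0] := and3P (preim_partitionP f [set: 'I_n]).
  by apply: contraNneq P0 => <-.
case: Hsep => [-> | /setIidPl ->]; first by rewrite eqxx cards0.
rewrite N0; congr (_%:R).
have : (0 < #|N|)%N by rewrite card_gt0.
move: h1 Hsz; case: #|N| => [|[|[|k]]] //.
Qed.

Lemma denom_eq (R : realType) (n : nat) (f : 'I_n -> 'I_n) (S : {set 'I_n}) :
  (forall N, N \in nests (Mf R f) -> vnest (Mf R f) N S = #|N :&: S|%:R) ->
  denom (Mf R f) S = 1 + #|S|%:R.
Proof.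
move=> H; rewrite /denom (eq_bigr _ H) -natr_sum; congr (_ + _%:R).
have [/eqP cov ti _] := and3P (preim_partitionP f [set: 'I_n]).
have := @big_trivIset_cond _ _ 0%N addn _ (mem S) (fun _ => 1%N) ti.
rewrite /= cov => E.
transitivity (\sum_(x in [set: 'I_n] | x \in S) 1)%N.
  rewrite E; apply: eq_bigr => A _.
  rewrite -sum1_card; apply: eq_bigl => x; by rewrite inE.
by rewrite -sum1_card; apply: eq_bigl => x; rewrite inE.
Qed.

Lemma choice_eq (R : realType) (n : nat) (f : 'I_n -> 'I_n) (S : {set 'I_n}) :
  (forall N, N \in nests (Mf R f) -> vnest (Mf R f) N S = #|N :&: S|%:R) ->
  choice_prob (Mf R f) S =
  (fun o => match o with None => 1 / (1 + #|S|%:R)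
            | Some x => if x \in S then 1 / (1 + #|S|%:R) else 0 end).
Proof.
move=> H; apply: functional_extensionality => o.
case: o => [x|]; rewrite /choice_prob (denom_eq H) //.
case: ifP => // xS.
have [/eqP cov _ _] := and3P (preim_partitionP f [set: 'I_n]).
have xc : x \in cover (nests (Mf R f)) by rewrite /= cov inE.
rewrite H; last by apply: pblock_mem.
rewrite wsum1.
have xN : x \in nest_of (Mf R f) x :&: S by rewrite inE mem_pblock xc xS.
have k0 : #|nest_of (Mf R f) x :&: S|%:R != 0 :> R.
  by rewrite pnatr_eq0 -lt0n card_gt0; apply/set0Pn; exists x.
have D0 : 1 + #|S|%:R != 0 :> R.
  by rewrite gt_eqF // ltr_wpDr // ler0n.
have -> : wt (Mf R f) x = 1 by [].
move: k0 D0; set k := (X in X / _ * _); set D := 1 + _ => k0 D0.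
by rewrite !div1r mulrAC mulfV // mul1r.
Qed.

Lemma choice_eq2 (R : realType) (n : nat) (f : 'I_n -> 'I_n) (S : {set 'I_n}) :
  (forall x y, f x = f y -> (x \in S) = (y \in S)) ->
  (forall x, exists a b, [set y in [set: 'I_n] | f x == f y] \subset [set a; b]) ->
  choice_prob (Mf R f) S =
  (fun o => match o with None => 1 / (1 + #|S|%:R)
            | Some x => if x \in S then 1 / (1 + #|S|%:R) else 0 end).
Proof.
move=> H1 H2; apply: choice_eq => N HN.
have HN' := HN.
case/imsetP: HN => x _ eN; rewrite eN in HN' *; apply: vnest_eq; first exact: HN'.
  have [a [b sub]] := H2 x.
  apply: leq_trans (subset_leq_card sub) _; rewrite cards2; by case: (a != b).
case xS: (x \in S).
  right; apply/subsetP => y; rewrite inE => /andP[_ /eqP e].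
  by rewrite -(H1 _ _ e) xS.
left; apply/setP => y; rewrite !inE; apply/negbTE/negP => /andP[/andP[_ /eqP e]].
by rewrite -(H1 _ _ e) xS.
Qed.

Lemma transcripts_eq (R : realType) (n : nat) (f g : 'I_n -> 'I_n) (d : design R n) (T : nat) :
  (forall t, (t < T)%N -> choice_prob (Mf R f) (d (transcript d (Mf R f) t)) =
                       choice_prob (Mf R g) (d (transcript d (Mf R f) t))) ->
  forall t, (t <= T)%N -> transcript d (Mf R f) t = transcript d (Mf R g) t.
Proof.
move=> H; elim => [//|t IH] tT /=.
by rewrite -IH ?(ltnW tT) // H.
Qed.

Definition gmerge (n : nat) (i j : 'I_n) (x : 'I_n) : 'I_n := if x == j then i else x.

Theorem theoremB1 (R : realType) :
  exists c : R, 0 < c /\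
    forall (n : nat), (2 <= n)%N ->
    forall (T : nat) (d : design R n),
      identifies d T -> c * ln (n%:R : R) <= T%:R.
Proof.
exists 1; split; first exact: ltr01.
move=> n n2 T d Hid.
suff le : (n <= 2 ^ T)%N.
  rewrite mul1r.
  have le' : (n%:R : R) <= (2:R) ^+ T by rewrite -natrX ler_nat.
  apply: le_trans (_ : ln ((2:R) ^+ T) <= _).
    rewrite ler_ln // posrE ?ltr0n ?exprn_gt0 //; by case: n n2 {le le'} d Hid.
  rewrite lnXn // -[T%:R]/(1 *+ T) lerMn2r; apply/orP; right.
  have := @le_ln1Dx R 1; rewrite (_ : 1 + 1 = 2 :> R); last by [].
  by apply; lra.
rewrite leqNgt; apply/negP => lt.
pose M0 := Mf R (@id 'I_n).
pose sig x := [ffun t : 'I_T => x \in d (transcript d M0 t)].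
have ninj : ~~ injectiveb sig.
  apply/negP => /injectiveP inj.
  have := leq_card sig inj.
  by rewrite card_ord card_ffun card_bool card_ord leqNgt lt.
case/injectivePn: ninj => i [j nij eqs].
pose g := gmerge i j.
have Hsep t (tT : (t < T)%N) : (i \in d (transcript d M0 t)) = (j \in d (transcript d M0 t)).
  by have := congr1 (fun F : {ffun 'I_T -> bool} => F (Ordinal tT)) eqs; rewrite /= !ffunE.
have Htr : forall t, (t < T)%N -> choice_prob (Mf R id) (d (transcript d (Mf R id) t)) =
                       choice_prob (Mf R g) (d (transcript d (Mf R id) t)).
  move=> t tT; have hs := Hsep t tT.
  rewrite (@choice_eq2 R n id); last first.
  - move=> x; exists x, x; apply/subsetP => y; rewrite !inE => /eqP ->; by rewrite eqxx.
  - by move=> x y e; subst.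
  rewrite (@choice_eq2 R n g) //.
  - move=> x y; rewrite /g /gmerge.
    case: eqP => [->|nx]; case: eqP => [->|ny] //=.
    all: try by move=> <-; rewrite ?hs.
    all: try by move=> ->; rewrite ?hs.
  - move=> x; exists x, (if x == i then j else i).
    apply/subsetP => y; rewrite !inE /g /gmerge => /eqP.
    case: (x =P j) => [xj|nxj]; case: (y =P j) => [yj|nyj]; case: (x =P i) => [xi|nxi];
      move=> e; subst; rewrite ?eqxx ?orbT //=.
    all: try by rewrite eqxx in nij.
have Eq := Hid M0 (Mf R g) (Mf_valid R id) (Mf_valid R g) (@transcripts_eq R n id g d T Htr T (leqnn T)).
have Eq' : equivalence_partition (fun x y : 'I_n => id x == id y) [set: 'I_n] =
           equivalence_partition (fun x y => g x == g y) [set: 'I_n] := Eq.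
have e1 := pblock_equivalence_partition (eqi_pre (@id 'I_n)) (in_setT i) (in_setT j).
have e2 := pblock_equivalence_partition (eqi_pre g) (in_setT i) (in_setT j).
rewrite Eq' e2 /= (negbTE nij) in e1.
move: e1; rewrite /g /gmerge eqxx.
by case: (i == j); rewrite eqxx.
Qed.
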